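(* Let $R$ be a commutative ring equipped with an exhaustive $\Gamma$-filtration $FR=\{F_\gamma R\}_{\gamma\in\Gamma}$, and put $R_0=F_0R$ (a subring of $R$ containing $1$). Let $R\langle X\rangle=R\langle X_1,\dots,X_n\rangle$ and let $\mathcal I$ be an ideal of $R\langle X\rangle$ generated by a subset $\mathcal G\subset R_0\langle X\rangle=R_0\langle X_1,\dots,X_n\rangle$ which is a monic Gröbner basis of $\mathcal I$ in $R\langle X\rangle$ with respect to a monomial ordering $\prec$ on $\mathcal B_R$, with $\mathrm{LM}(g)\neq 1$ for every $g\in\mathcal G$. Let $A=R\langle X\rangle/\mathcal I$ and let $\overline{N(\mathcal G)}$ be the image of $N(\mathcal G)$ in $A$. For $\gamma\in\Gamma$ put $$F_\gamma A=\Big\{a=\textstyle\sum_i\lambda_i\bar w_i \;\Big|\; \lambda_i\in F_\gamma R,\ \bar w_i\in\overline{N(\mathcal G)}\Big\}.$$ Then $FA=\{F_\gamma A\}_{\gamma\in\Gamma}$ is an exhaustive $\Gamma$-filtration of $A$, and $F_\gamma R=R\cap F_\gamma A$ for every $\gamma\in\Gamma$ (where $R$ is identified with its image $R\cdot\bar 1$ in $A$).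
   Context: $\Gamma$ is a totally ordered (not necessarily commutative) monoid with ordering $<$, whose operation is written $+$ and neutral element $0$. An exhaustive $\Gamma$-filtration of a ring $S$ is a family $\{F_\gamma S\}_{\gamma\in\Gamma}$ of additive subgroups with (F1) $S=\bigcup_\gamma F_\gamma S$; (F2) $F_{\gamma_1}S\subseteq F_{\gamma_2}S$ whenever $\gamma_1<\gamma_2$; (F3) $F_\gamma S\cdot F_\tau S\subseteq F_{\gamma+\tau}S$; (F4) $1\in F_0S$. For a commutative ring $D$, $D\langle X\rangle=D\langle X_1,\dots,X_n\rangle$ is the free $D$-algebra, with standard $D$-basis $\mathcal B_D$ of words in $X_1,\dots,X_n$ (empty word $=1$). A monomial ordering is a well-ordering $\prec$ on words such that $u\prec v$ implies $wus\prec wvs$, and $w=uv$ implies $u\preceq w$, $v\preceq w$. For nonzero $f=\sum\lambda_iw_i$ ($\lambda_i\neq0$, $w_1\prec\dots\prec w_s$), $\mathrm{LM}(f)=w_s$ and $\mathrm{LC}(f)=\lambda_s$. A set $G$ is monic if $\mathrm{LC}(g)=1$ for all $g\in G$. A word $v$ divides $u$ if $u=wvs$ for words $w,s$. A monic Gröbner basis of an ideal $I$ is a monic subset $\mathcal G\subset I$ such that for every nonzero $f\in I$ there is $g\in\mathcal G$ with $\mathrm{LM}(g)\mid\mathrm{LM}(f)$. $N(\mathcal G)$ is the set of words not divisible by $\mathrm{LM}(g)$ for any $g\in\mathcal G$; when $\mathcal G$ is a monic Gröbner basis of $I$, $\overline{N(\mathcal G)}$ is a free $R$-basis of $R\langle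 X\rangle/I$. *)

(* Defs.v *)
From HB Require Import structures.
From mathcomp Require Import all_boot all_order all_algebra.
Set Implicit Arguments. Unset Strict Implicit. Unset Printing Implicit Defensive.
Import Order.TTheory GRing.Theory.
Local Open Scope ring_scope.

Definition ordered_monoid (d : Order.disp_t) (Gam : orderType d)
  (gadd : Gam -> Gam -> Gam) (g0 : Gam) : Prop :=
  [/\ (forall a b c, gadd a (gadd b c) = gadd (gadd a b) c),
      (forall a, gadd g0 a = a), (forall a, gadd a g0 = a) &
      (forall a b c, (a <= b)%O -> (gadd c a <= gadd c b)%O /\ (gadd a c <= gadd b c)%O)].

Definition exh_filtration (d : Order.disp_t) (Gam : orderType d)
  (gadd : Gam -> Gam -> Gam) (g0 : Gam) (R : comPzRingType)
  (F : Gam -> R -> Prop) : Prop :=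
  [/\ (forall g, F g 0 /\ (forall x y, F g x -> F g y -> F g (x - y))),
      (forall x : R, exists g, F g x),
      (forall g1 g2 x, (g1 < g2)%O -> F g1 x -> F g2 x),
      (forall g t x y, F g x -> F t y -> F (gadd g t) (x * y))  &
      F g0 1].

(* Words in X_1..X_n (X_i encoded as i : 'I_n); the empty word is 1. *)
Definition word (n : nat) := seq 'I_n.

Section FreeAlg.
Variables (R : comPzRingType) (n : nat).

(* An element of R<X> is its coefficient function (word -> R) with finite
   support; the ring operations are the usual ones (product = concatenation
   convolution). *)
Definition fsupp (f : word n -> R) : Prop :=
  exists s : seq (word n), forall w, f w != 0 -> w \in s.

Definition pzero : word n -> R := fun _ => 0.
Definition pone : word n -> R := fun w => (w == [::])%:R.
Definition pconst (c : R) : word n -> R := fun w => if w == [::] then c else 0.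
Definition padd (f g : word n -> R) : word n -> R := fun w => f w + g w.
Definition popp (f : word n -> R) : word n -> R := fun w => - f w.
Definition pmul (f g : word n -> R) : word n -> R :=
  fun w => \sum_(i < (size w).+1) f (take i w) * g (drop i w).

Definition lincomb (s : seq (R * word n)) : word n -> R :=
  fun w => \sum_(x <- s | x.2 == w) x.1.

Definition is_ideal (J : (word n -> R) -> Prop) : Prop :=
  [/\ (forall f, J f -> fsupp f), J pzero,
      (forall f g, J f -> J g -> J (padd f g)),
      (forall f, J f -> J (popp f)) &
      (forall f h, J f -> fsupp h -> J (pmul h f) /\ J (pmul f h))].

Definition ideal_gen (G : (word n -> R) -> Prop) : (word n -> R) -> Prop :=
  fun f => forall J, is_ideal J -> (forall g, G g -> J g) -> J f.

Definition preceq (prec : rel (word n)) (u v : word n) : Prop := u = v \/ prec u v.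

Definition monomial_ordering (prec : rel (word n)) : Prop :=
  [/\ (forall u, ~~ prec u u),
      (forall u v w, prec u v -> prec v w -> prec u w),
      (forall u v, [\/ u = v, prec u v | prec v u]) &
      well_founded (fun u v => prec u v)] /\
  (
      (forall u v w s, prec u v -> prec (w ++ u ++ s) (w ++ v ++ s)) /\
      (forall u v, preceq prec u (u ++ v) /\ preceq prec v (u ++ v))).

Definition is_LM (prec : rel (word n)) (f : word n -> R) (m : word n) : Prop :=
  f m != 0 /\ forall w, f w != 0 -> preceq prec w m.

Definition wdivides (v u : word n) : Prop := exists w s, u = w ++ v ++ s.

Definition monic_groebner (prec : rel (word n))
  (G I : (word n -> R) -> Prop) : Prop :=
  (forall g, G g -> I g /\ exists m, is_LM prec g m /\ g m = 1) /\
  (forall f, I f -> (exists w, f w != 0) ->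
     forall m, is_LM prec f m ->
       exists g m', [/\ G g, is_LM prec g m' & wdivides m' m]).

Definition normal_word (prec : rel (word n)) (G : (word n -> R) -> Prop)
  (w : word n) : Prop :=
  forall g m, G g -> is_LM prec g m -> ~ wdivides m w.

(* F_gamma A, on representatives f in R<X> of elements of A = R<X>/I:
   f + I = sum_i lambda_i (w_i + I) with lambda_i in F_gamma R, w_i in N(G). *)
Definition FA (d : Order.disp_t) (Gam : orderType d) (prec : rel (word n))
  (G I : (word n -> R) -> Prop) (F : Gam -> R -> Prop) (g : Gam)
  (f : word n -> R) : Prop :=
  exists s : seq (R * word n),
    [/\ (forall x, x \in s -> F g x.1),
        (forall x, x \in s -> normal_word prec G x.2) &
        I (padd f (popp (lincomb s)))].

(* An exhaustive Gamma-filtration of A = R<X>/I, where elements of A are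
   represented by elements of R<X> and the operations are those of R<X>
   (the predicate FA' is I-saturated, i.e. a predicate on classes). *)
Definition quot_exh_filtration (d : Order.disp_t) (Gam : orderType d)
  (gadd : Gam -> Gam -> Gam) (g0 : Gam) (I : (word n -> R) -> Prop)
  (FA' : Gam -> (word n -> R) -> Prop) : Prop :=
  [/\ (forall g, (forall f f', FA' g f -> fsupp f' -> I (padd f (popp f')) -> FA' g f')
                 /\ FA' g pzero
                 /\ (forall f h, FA' g f -> FA' g h -> FA' g (padd f (popp h)))),
      (forall f, fsupp f -> exists g, FA' g f),
      (forall g1 g2 f, (g1 < g2)%O -> FA' g1 f -> FA' g2 f),
      (forall g t f h, FA' g f -> FA' t h -> FA' (gadd g t) (pmul f h)) &
      FA' g0 pone].

End FreeAlg.

(* Main.v *)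
Require Import Defs.
From HB Require Import structures.
From mathcomp Require Import all_boot all_order all_algebra.
From Stdlib Require Import FunctionalExtensionality Classical.
Import Order.TTheory GRing.Theory.
Local Open Scope ring_scope.
Set Implicit Arguments. Unset Strict Implicit. Unset Printing Implicit Defensive.

Definition mono (R : comPzRingType) (n : nat) (c : R) (u : word n) : word n -> R :=
  fun w => if w == u then c else 0.

Lemma sum_nz (R : comPzRingType) k (F : 'I_k -> R) :
  \sum_(i < k) F i != 0 -> exists i, F i != 0.
Proof.
move=> H; apply: NNPP => Hn; move/negP: H; apply; apply/eqP.
apply: big1 => i _; apply/eqP; apply: NNPP => Hi; apply: Hn; by exists i; apply/negP.
Qed.

Lemma take_eq_size (T : Type) (x u : seq T) i :
  take i x = u -> (i <= size x)%N -> i = size u.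
Proof.
move=> <- Hi; rewrite size_take; case: ltnP => // H.
by apply/eqP; rewrite eqn_leq Hi H.
Qed.

Lemma drop_eq_size (T : Type) (x v : seq T) i :
  drop i x = v -> (i <= size x)%N -> i = (size x - size v)%N.
Proof. by move=> <- Hi; rewrite size_drop subKn. Qed.

Lemma fsupp_mono (R : comPzRingType) n (c : R) (u : word n) : fsupp (mono c u).
Proof. exists [:: u] => w; rewrite /mono; case: (w =P u) => [->|]; by rewrite ?inE ?eqxx. Qed.

Lemma pmul_monoL (R : comPzRingType) n (c : R) (u : word n) f y :
  pmul (mono c u) f (u ++ y) = c * f y.
Proof.
rewrite /pmul.
have Hu : (size u < (size (u ++ y)).+1)%N by rewrite ltnS size_cat leq_addr.
rewrite (bigD1 (Ordinal Hu)) //= take_size_cat // drop_size_cat // /mono eqxx.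
rewrite big1 ?addr0 // => i Hi; case: (take i (u ++ y) =P u) => [E|_]; last by rewrite mul0r.
have := take_eq_size E; rewrite -ltnS => /(_ (ltn_ord i)) Ei.
by move: Hi; rewrite -val_eqE /= Ei eqxx.
Qed.

Lemma pmul_monoL_nz (R : comPzRingType) n (c : R) (u : word n) f x :
  pmul (mono c u) f x != 0 -> exists y, x = u ++ y.
Proof.
case/sum_nz => i; rewrite /mono; case: (take i x =P u) => [E _|]; last by rewrite mul0r eqxx.
by exists (drop i x); rewrite -E cat_take_drop.
Qed.

Lemma pmul_monoR (R : comPzRingType) n (c : R) (v : word n) f y :
  pmul f (mono c v) (y ++ v) = f y * c.
Proof.
rewrite /pmul.
have Hu : (size y < (size (y ++ v)).+1)%N by rewrite ltnS size_cat leq_addr.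
rewrite (bigD1 (Ordinal Hu)) //= take_size_cat // drop_size_cat // /mono eqxx.
rewrite big1 ?addr0 // => i Hi; case: (drop i (y ++ v) =P v) => [E|_]; last by rewrite mulr0.
have := drop_eq_size E; rewrite -ltnS => /(_ (ltn_ord i)) Ei.
by move: Hi; rewrite -val_eqE /= Ei size_cat addnK eqxx.
Qed.

Lemma pmul_monoR_nz (R : comPzRingType) n (c : R) (v : word n) f x :
  pmul f (mono c v) x != 0 -> exists y, x = y ++ v.
Proof.
case/sum_nz => i; rewrite /mono; case: (drop i x =P v) => [E _|]; last by rewrite mulr0 eqxx.
by exists (take i x); rewrite -E cat_take_drop.
Qed.

Lemma fsupp_add (R : comPzRingType) n (f g : word n -> R) :
  fsupp f -> fsupp g -> fsupp (padd f g).
Proof.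
move=> [s Hs] [t Ht]; exists (s ++ t) => w; rewrite /padd mem_cat => H.
case: (boolP (f w != 0)) => [/Hs -> //|]; rewrite negbK => /eqP E.
by rewrite Ht ?orbT //; move: H; rewrite E add0r.
Qed.

Lemma fsupp_opp (R : comPzRingType) n (f : word n -> R) :
  fsupp f -> fsupp (popp f).
Proof. by move=> [s Hs]; exists s => w; rewrite /popp oppr_eq0; apply: Hs. Qed.

Lemma fsupp_mul (R : comPzRingType) n (f g : word n -> R) :
  fsupp f -> fsupp g -> fsupp (pmul f g).
Proof.
move=> [s Hs] [t Ht]; exists [seq x ++ y | x <- s, y <- t] => w /sum_nz [i Hi].
rewrite -(cat_take_drop i w); apply: allpairs_f.
  by apply: Hs; apply: contraNneq Hi => ->; rewrite mul0r.
by apply: Ht; apply: contraNneq Hi => ->; rewrite mulr0.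
Qed.

Lemma lincomb_cat (R : comPzRingType) n (s t : seq (R * word n)) w :
  lincomb (s ++ t) w = lincomb s w + lincomb t w.
Proof. by rewrite /lincomb big_cat. Qed.

Lemma lincomb_neg (R : comPzRingType) n (s : seq (R * word n)) w :
  lincomb [seq (- x.1, x.2) | x <- s] w = - lincomb s w.
Proof. by rewrite /lincomb big_map sumrN. Qed.

Lemma lincomb1 (R : comPzRingType) n (c : R) (u : word n) w :
  lincomb [:: (c, u)] w = if u == w then c else 0.
Proof. by rewrite /lincomb big_cons big_nil /=; case: ifP; rewrite ?addr0. Qed.

Lemma lincomb_nz (R : comPzRingType) n (s : seq (R * word n)) w :
  lincomb s w != 0 -> w \in map snd s.
Proof.
apply: contraNT => Hw; apply/eqP; apply: big1_seq => x /andP [/eqP Ex Hx].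
by move: Hw; rewrite -Ex map_f.
Qed.

Lemma fsupp_lincomb (R : comPzRingType) n (s : seq (R * word n)) : fsupp (lincomb s).
Proof. by exists (map snd s) => w; apply: lincomb_nz. Qed.

Lemma pmul_identity (R : comPzRingType) n (f h a b : word n -> R) :
  padd (pmul f h) (popp (pmul a b)) =
  padd (pmul (padd f (popp a)) h) (pmul a (padd h (popp b))).
Proof.
apply: functional_extensionality => w; rewrite /padd /popp /pmul -big_split /=.
rewrite -sumrN -big_split /=; apply: eq_bigr => i _.
by rewrite mulrDl mulrDr mulNr mulrN addrA addrNK.
Qed.

Lemma max_seq n (prec : rel (word n))
  (Htr : forall u v w, prec u v -> prec v w -> prec u w)
  (Htot : forall u v, [\/ u = v, prec u v | prec v u]) (S : seq (word n)) :
  S != [::] -> exists m, m \in S /\ forall w, w \in S -> preceq prec w m.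
Proof.
elim: S => [//|a S IH] _; case: (altP (S =P [::])) => [->|/IH [m [Hm Hw]]].
  by exists a; split; rewrite ?inE ?eqxx // => w; rewrite inE => /eqP ->; left.
case: (Htot a m) => [E|P|P].
- exists m; split; first by rewrite inE Hm orbT.
  by move=> w; rewrite inE => /orP [/eqP ->|/Hw]; [left|].
- exists m; split; first by rewrite inE Hm orbT.
  by move=> w; rewrite inE => /orP [/eqP ->|/Hw]; [right|].
- exists a; split; first by rewrite inE eqxx.
  move=> w; rewrite inE => /orP [/eqP ->|/Hw [->|Q]]; [left|right|right] => //.
  exact: Htr Q P.
Qed.

Lemma fsupp_max (R : comPzRingType) n (prec : rel (word n))
  (Htr : forall u v w, prec u v -> prec v w -> prec u w)
  (Htot : forall u v, [\/ u = v, prec u v | prec v u]) (f : word n -> R) :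
  fsupp f -> (forall w, f w = 0) \/
             exists m, f m != 0 /\ forall w, f w != 0 -> preceq prec w m.
Proof.
move=> [S HS]; case: (altP ([seq w <- S | f w != 0] =P [::])) => [E|].
  left => w; apply/eqP; apply: NNPP => /negP Hw.
  by have := mem_filter (fun w => f w != 0) w S; rewrite E Hw HS.
case/(max_seq Htr Htot) => m [Hm Hw]; right; exists m.
move: Hm; rewrite mem_filter => /andP [Hm _]; split => // w Hfw.
by apply: Hw; rewrite mem_filter Hfw HS.
Qed.

Unset Implicit Arguments. Set Strict Implicit.

Theorem theorem3p1 (d : Order.disp_t) (Gam : orderType d)
  (gadd : Gam -> Gam -> Gam) (g0 : Gam) (HGam : ordered_monoid gadd g0)
  (R : comPzRingType) (F : Gam -> R -> Prop) (HF : exh_filtration gadd g0 F)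
  (n : nat) (prec : rel (word n)) (Hprec : monomial_ordering prec)
  (G : (word n -> R) -> Prop)
  (HG0 : forall g, G g -> fsupp g /\ forall w, F g0 (g w))
  (HGB : monic_groebner prec G (ideal_gen G))
  (HLM1 : forall g m, G g -> is_LM prec g m -> m != [::]) :
  quot_exh_filtration gadd g0 (ideal_gen G) (FA prec G (ideal_gen G) F) /\
  (forall (g : Gam) (c : R),
     F g c <-> FA prec G (ideal_gen G) F g (@pconst R n c)).
Proof.
case: HF => Hsub HF1 HF2 HF3 HF4.
case: HGam => _ _ Hg0r _.
case: Hprec => [[Hirr Htr Htot Hwf] [Hmon _]].
set I := ideal_gen G.
have F0 : forall g, F g 0 by move=> g; case: (Hsub g).
have Fsub : forall g x y, F g x -> F g y -> F g (x - y) by move=> g; case: (Hsub g).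
have Fneg : forall g x, F g x -> F g (- x).
  by move=> g x Hx; rewrite -sub0r; apply: Fsub.
have Fadd : forall g x y, F g x -> F g y -> F g (x + y).
  by move=> g x y Hx Hy; rewrite -(opprK y); apply: Fsub => //; apply: Fneg.
have Fle : forall g1 g2 x, (g1 <= g2)%O -> F g1 x -> F g2 x.
  move=> g1 g2 x; rewrite le_eqVlt => /orP [/eqP ->//|]; exact: HF2.
have Fsum : forall g (s : seq (R * word n)) w,
    (forall x, x \in s -> F g x.1) -> F g (lincomb s w).
  move=> g s w Hs; rewrite /lincomb big_seq_cond.
  apply: (big_ind (F g)) => // [|x /andP [Hx _]]; [exact: Fadd | exact: Hs].
have Ipadd : forall f h, I f -> I h -> I (padd f h).
  by move=> f h Hf Hh J HJ HGJ; case: (HJ) => _ _ Ha _ _; apply: Ha; [apply: Hf|apply: Hh].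
have Ipopp : forall f, I f -> I (popp f).
  by move=> f Hf J HJ HGJ; case: (HJ) => _ _ _ Ho _; apply: Ho; apply: Hf.
have Ipz : I (@pzero R n) by move=> J [].
have IG : forall g, G g -> I g by move=> g Gg J _ HGJ; apply: HGJ.
have IL : forall f h, I f -> fsupp h -> I (pmul h f).
  by move=> f h Hf Hh J HJ HGJ; case: (HJ) => _ _ _ _ Hm; case: (Hm f h (Hf J HJ HGJ) Hh).
have IR : forall f h, I f -> fsupp h -> I (pmul f h).
  by move=> f h Hf Hh J HJ HGJ; case: (HJ) => _ _ _ _ Hm; case: (Hm f h (Hf J HJ HGJ) Hh).
have Ifs : forall f, I f -> fsupp f.
  move=> f Hf; apply: Hf => [|g Gg]; last by case: (HG0 g Gg).
  split => //; first by exists [::] => w; rewrite eqxx.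
  - exact: fsupp_add.
  - exact: fsupp_opp.
  - by move=> f' h Hf' Hh; split; apply: fsupp_mul.
have Iext : forall f h, (forall w, f w = h w) -> I f -> I h.
  by move=> f h E; rewrite (functional_extensionality _ _ E).
have FAext : forall g f h, (forall w, f w = h w) -> FA prec G I F g f -> FA prec G I F g h.
  by move=> g f h E; rewrite (functional_extensionality _ _ E).
have FAzero : forall g f, (forall w, f w = 0) -> FA prec G I F g f.
  move=> g f E; exists [::]; split => //.
  by apply: Iext Ipz => w; rewrite /padd /popp /lincomb big_nil E oppr0 addr0.
have FAadd : forall g a b, FA prec G I F g a -> FA prec G I F g b -> FA prec G I F g (padd a b).
  move=> g a b [s [Hs1 Hs2 Hs3]] [t [Ht1 Ht2 Ht3]]; exists (s ++ t); split.
  - by move=> x; rewrite mem_cat => /orP [/Hs1|/Ht1].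
  - by move=> x; rewrite mem_cat => /orP [/Hs2|/Ht2].
  apply: Iext (Ipadd _ _ Hs3 Ht3) => w; rewrite /padd /popp lincomb_cat opprD.
  by rewrite addrACA.
have FAI : forall g a e, FA prec G I F g a -> I e -> FA prec G I F g (padd a e).
  move=> g a e [s [Hs1 Hs2 Hs3]] He; exists s; split => //.
  apply: Iext (Ipadd _ _ Hs3 He) => w; rewrite /padd /popp.
  by rewrite addrAC.
have normal_nil : normal_word prec G [::].
  move=> g m Gg LM [a [b]] /(congr1 size); rewrite !size_cat => /eqP.
  rewrite eq_sym !addn_eq0 => /and3P [_ /eqP /size0nil Hm _].
  by move: (HLM1 g m Gg LM); rewrite Hm.
have FAmono : forall g c u, normal_word prec G u -> F g c -> FA prec G I F g (mono c u).
  move=> g c u Hu Hc; exists [:: (c, u)]; split.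
  - by move=> x; rewrite mem_seq1 => /eqP ->.
  - by move=> x; rewrite mem_seq1 => /eqP ->.
  apply: Iext Ipz => w; rewrite /padd /popp lincomb1 /mono /pzero eq_sym.
  by case: ifP; rewrite ?subrr ?oppr0 ?addr0.
have LMuniq : forall (f : word n -> R) (m m' : word n), is_LM prec f m -> is_LM prec f m' -> m = m'.
  move=> f m m'; rewrite /is_LM => -[H1 H2] [H1' H2']; case: (H2' _ H1) => [//|P].
  case: (H2 _ H1') => [E|P']; first by [].
  by move: (Hirr m); rewrite (Htr _ _ _ P P').
have step : forall (g : Gam) (m1 : word n),
    (forall f : word n -> R, fsupp f -> (forall w, F g (f w)) ->
       (forall w, f w != 0 -> prec w m1) -> FA prec G I F g f) ->
    forall f : word n -> R, fsupp f -> (forall w, F g (f w)) ->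
       (forall w, f w != 0 -> preceq prec w m1) -> FA prec G I F g f.
  move=> g m1 H.
  have HM : forall c, F g c -> FA prec G I F g (mono c m1).
    move=> c Hc; case: (classic (normal_word prec G m1)) => Hnorm.
      exact: FAmono.
    have [gg [M [Gg [LM [u [v Huv]]]]]] :
        exists gg M, G gg /\ is_LM prec gg M /\ wdivides M m1.
      apply: NNPP => Hn; apply: Hnorm => gg M Gg LM Hd; apply: Hn.
      by exists gg, M.
    have gM1 : gg M = 1.
      case: (HGB) => H1 _; case: (H1 gg Gg) => _ [m0 [LM0 E0]].
      by rewrite (LMuniq _ _ _ LM LM0).
    set e := pmul (pmul (mono c u) gg) (mono 1 v).
    have Ie : I e by apply: IR; [apply: IL; [apply: IG|apply: fsupp_mono]|apply: fsupp_mono].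
    have eval : forall y, e (u ++ y ++ v) = c * gg y.
      by move=> y; rewrite /e catA pmul_monoR pmul_monoL mulr1.
    have enz : forall x, e x != 0 -> exists y, x = u ++ y ++ v /\ e x = c * gg y.
      move=> x Hx; have [z Ez] := pmul_monoR_nz Hx.
      move: Hx; rewrite /e Ez pmul_monoR mulr1 => /pmul_monoL_nz [y Ey].
      exists y; rewrite Ey -catA; split => //.
      exact: pmul_monoL.
    have Fe : forall w, F g (e w).
      move=> w; case: (altP (e w =P 0)) => [->|/enz [y [_ ->]]]; first exact: F0.
      rewrite -[g]Hg0r; apply: HF3 => //; exact: (HG0 gg Gg).2.
    have Hd : FA prec G I F g (padd (mono c m1) (popp e)).
      apply: H.
      - by apply: fsupp_add; [apply: fsupp_mono|apply: fsupp_opp; apply: Ifs].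
      - by move=> w; rewrite /padd /popp; apply: Fsub => //; rewrite /mono; case: ifP.
      move=> w; rewrite /padd /popp /mono; case: (altP (w =P m1)) => [->|Hw].
        by rewrite {1}Huv eval gM1 mulr1 subrr eqxx.
      rewrite add0r oppr_eq0 => /[dup] Hx /enz [y [Ey Ex]].
      move: Hx; rewrite Ex; case: (altP (gg y =P 0)) => [->|Hy _]; first by rewrite mulr0 eqxx.
      case: LM => _ /(_ y Hy) [Ey'|P].
        by move: Hw; rewrite Ey Huv Ey' eqxx.
      by rewrite Ey Huv; apply: Hmon.
    by apply: FAext (FAI _ _ _ Hd Ie) => w; rewrite /padd /popp addrNK.
  move=> f Hf Hc Hs.
  set f1 := fun w => if w == m1 then 0 else f w.
  have Hf1 : FA prec G I F g f1.
    apply: H.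
    - case: Hf => S HS; exists S => w; rewrite /f1; case: ifP => _; last exact: HS.
      by rewrite eqxx.
    - by move=> w; rewrite /f1; case: ifP.
    move=> w; rewrite /f1; case: (altP (w =P m1)) => [_|Hw]; first by rewrite eqxx.
    by move=> /Hs [E|//]; move: Hw; rewrite E eqxx.
  apply: FAext (FAadd _ _ _ Hf1 (HM _ (Hc m1))) => w.
  rewrite /padd /f1 /mono; case: (altP (w =P m1)) => [->|_]; by rewrite ?add0r ?addr0.
have main : forall (g : Gam) (m : word n) (f : word n -> R), fsupp f -> (forall w, F g (f w)) ->
       (forall w, f w != 0 -> prec w m) -> FA prec G I F g f.
  move=> g m; elim/(well_founded_ind Hwf): m => m IH f Hf Hc Hs.
  case: (fsupp_max Htr Htot Hf) => [E|[m1 [Hm1 Hle]]]; first exact: FAzero.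
  exact: (step g m1 (IH m1 (Hs m1 Hm1))).
have NF : forall (g : Gam) (f : word n -> R), fsupp f -> (forall w, F g (f w)) -> FA prec G I F g f.
  move=> g f Hf Hc.
  case: (fsupp_max Htr Htot Hf) => [E|[m1 [Hm1 Hle]]]; first exact: FAzero.
  exact: (step g m1 (main g m1)).
have FAfs : forall g f, FA prec G I F g f -> fsupp f.
  move=> g f [s [_ _ Hs]].
  have -> : f = padd (padd f (popp (lincomb s))) (lincomb s).
    by apply: functional_extensionality => w; rewrite /padd /popp addrNK.
  by apply: fsupp_add; [apply: Ifs|apply: fsupp_lincomb].
split; first split.
- move=> g; split; last split.
  + move=> f f' [s [Hs1 Hs2 Hs3]] Hf' Hff'; exists s; split => //.
    apply: Iext (Ipadd _ _ (Ipopp _ Hff') Hs3) => w; rewrite /padd /popp.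
    by rewrite opprB addrA addrNK.
  + exact: FAzero.
  + move=> f h [s [Hs1 Hs2 Hs3]] [t [Ht1 Ht2 Ht3]].
    exists (s ++ [seq (- x.1, x.2) | x <- t]); split.
    * move=> x; rewrite mem_cat => /orP [/Hs1 //|/mapP [y /Ht1 Hy ->]]; exact: Fneg.
    * move=> x; rewrite mem_cat => /orP [/Hs2 //|/mapP [y /Ht2 Hy ->]]; exact: Hy.
    apply: Iext (Ipadd _ _ Hs3 (Ipopp _ Ht3)) => w.
    rewrite /padd /popp lincomb_cat lincomb_neg !opprD !opprK.
    by rewrite addrACA addrC addrACA addrC.
- move=> f [S HS].
  have [g Hg] : exists g, forall w, w \in S -> F g (f w).
    elim: S {HS} => [|a S [g Hg]]; first by exists g0.
    have [g1 H1] := HF1 (f a).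
    case: (leP g1 g) => Hle.
      exists g => w; rewrite inE => /orP [/eqP ->|/Hg //]; exact: Fle H1.
    exists g1 => w; rewrite inE => /orP [/eqP -> //|/Hg]; apply: Fle; exact: ltW.
  exists g; apply: NF; first by exists S.
  move=> w; case: (altP (f w =P 0)) => [->|/HS]; [exact: F0|exact: Hg].
- move=> g1 g2 f Hlt [s [Hs1 Hs2 Hs3]]; exists s; split => // x /Hs1; exact: HF2.
- move=> g t f h Hf Hh.
  have Hffs := FAfs _ _ Hf; have Hhfs := FAfs _ _ Hh.
  case: Hf => s [Hs1 Hs2 Hs3]; case: Hh => u [Hu1 Hu2 Hu3].
  have [r [Hr1 Hr2 Hr3]] : FA prec G I F (gadd g t) (pmul (lincomb s) (lincomb u)).
    apply: NF; first by apply: fsupp_mul; apply: fsupp_lincomb.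
    move=> w; rewrite /pmul; apply: (big_ind (F (gadd g t))) => //; first exact: Fadd.
    by move=> i _; apply: HF3; apply: Fsum.
  exists r; split => //.
  have Hd : I (padd (pmul f h) (popp (pmul (lincomb s) (lincomb u)))).
    rewrite pmul_identity; apply: Ipadd; [apply: IR|apply: IL] => //.
    exact: fsupp_lincomb.
  apply: Iext (Ipadd _ _ Hd Hr3) => w; rewrite /padd /popp.
  by rewrite addrA addrNK.
- exists [:: (1, [::])]; split.
  + by move=> x; rewrite mem_seq1 => /eqP ->.
  + by move=> x; rewrite mem_seq1 => /eqP ->.
  apply: Iext Ipz => w; rewrite /padd /popp lincomb1 /pone /pzero.
  by case: (altP (w =P [::])) => [->|H]; rewrite ?eqxx ?subrr // eq_sym (negbTE H) subr0.
move=> g c; split => [Hc|[s [Hs1 Hs2 Hs3]]].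
  exists [:: (c, [::])]; split.
  + by move=> x; rewrite mem_seq1 => /eqP ->.
  + by move=> x; rewrite mem_seq1 => /eqP ->.
  apply: Iext Ipz => w; rewrite /padd /popp lincomb1 /pconst /pzero.
  by case: (altP (w =P [::])) => [->|H]; rewrite ?eqxx ?subrr // eq_sym (negbTE H) subr0.
case: (fsupp_max Htr Htot (Ifs _ Hs3)) => [E|[m [Hm Hle]]].
  move: (E [::]); rewrite /padd /popp /pconst eqxx => /eqP; rewrite subr_eq0 => /eqP ->.
  exact: Fsum.
have [gg [m' [Gg LM' Hdiv]]] : exists gg m', [/\ G gg, is_LM prec gg m' & wdivides m' m].
  case: HGB => _ H; apply: (H _ Hs3); first by exists m.
  by split.
case: (altP (m =P [::])) => [Em|Hne].
  by move: Hdiv; rewrite Em => /(normal_nil gg m' Gg LM').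
move: Hm; rewrite /padd /popp /pconst (negbTE Hne) add0r oppr_eq0 => /lincomb_nz.
by case/mapP => x /Hs2 Hx Ex; exfalso; apply: (Hx gg m' Gg LM'); rewrite -Ex.
Qed.
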